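(* Let $A\subset\mathbb S$, $\epsilon>0$, $a\in A$, and let $x\in\mathbb{R}^n$ be $\epsilon$-trapped by $a$. Then the orbit $\{T^ix\}$ does not converge to $A$.
   Context: Work in $X=\mathbb{R}^n$ with Euclidean distance $d$ and norm $\|\cdot\|$, unit sphere $\mathbb S$. An inversion is a map $\iota=B\circ\iota_0$ where $\iota_0(x)=x/\|x\|^2$ and $B$ is an isometry fixing $0$. Let $\mathcal Z$ be a discrete group of isometries of $X$ and fix a sequence $\gamma_1,\gamma_2,\dots$ in $\mathcal Z$; set $T^0=\mathrm{id}$ and $T^ix=\gamma_i^{-1}\iota\gamma_{i-1}^{-1}\iota\cdots\gamma_1^{-1}\iota x$. For $A\subset\mathbb S$ and $r>0$, $N_r(A)$ is the open $r$-neighborhood of $A$. For $x$ with $\|T^ix\|<1$ for all $i\ge0$: $x$ $\epsilon$-orbits $A$ if $T^ix\in N_\epsilon(A)$ for all $i\ge0$; $x$ eventually $\epsilon$-orbits $A$ if this holds for all sufficiently large $i$; $x$ (equivalently its orbit) converges to $A$ if it eventually $\epsilon$-orbits $A$ for every $\epsilon>0$. For $a\in A$, the Voronoi cell is $V(a,A)=\{x:d(x,a)\le d(x,b)\text{ for all }b\in A\setminus\{a\}\}$ and $V_r(a,A)=N_r(a)\cap V(a,A)$. A point $a\in A$ is an $\epsilon$-trap (relative to $A$) if (i) $T^ia\in A$ for all $i>0$, and (ii) every $x$ that $\epsilon$-orbits $A$ and lies in $V_\epsilon(a,A)$ satisfies $T^ix\in V_\epsilon(T^ia,A)$ for all $i\ge0$.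 A point $x$ is $\epsilon$-trapped by $a$ if $a$ is an $\epsilon$-trap, $x$ $\epsilon$-orbits $A$, and $x\in V_\epsilon(a,A)$. *)

(* Defs.v *)
From mathcomp Require Import all_boot all_order all_algebra.
From mathcomp Require Import reals.
From Stdlib Require List.
Set Implicit Arguments.
Unset Strict Implicit.
Unset Printing Implicit Defensive.
Import Order.TTheory GRing.Theory Num.Theory.
Local Open Scope ring_scope.

Section Defs.
Variables (R : realType) (n : nat).

Notation vec := 'rV[R]_n.

Definition enorm (x : vec) : R := Num.sqrt (\sum_(i < n) (x ord0 i) ^+ 2).
Definition edist (x y : vec) : R := enorm (x - y).

Definition on_sphere (x : vec) : Prop := enorm x = 1.

Definition is_isometry (f : vec -> vec) : Prop :=
  forall x y, edist (f x) (f y) = edist x y.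

Definition isometry_group (Z : (vec -> vec) -> Prop) : Prop :=
  [/\ forall g, Z g -> is_isometry g,
      Z id,
      forall g h, Z g -> Z h -> Z (g \o h)
    & forall g, Z g -> exists2 h, Z h & cancel g h /\ cancel h g].

(* discreteness of a group of isometries of R^n (equivalently, proper
   discontinuity): only finitely many elements move 0 into any ball *)
Definition discrete_group (Z : (vec -> vec) -> Prop) : Prop :=
  forall r : R, exists s : seq (vec -> vec),
    forall g, Z g -> edist (g 0) 0 <= r -> List.In g s.

Definition iota0 (x : vec) : vec := (enorm x ^+ 2)^-1 *: x.
Definition inversion (B : vec -> vec) (x : vec) : vec := B (iota0 x).

(* T^i, where ginv i = gamma_i^{-1} *)
Fixpoint Tit (B : vec -> vec) (ginv : nat -> vec -> vec) (i : nat) (x : vec)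
  : vec :=
  match i with
  | 0 => x
  | i'.+1 => ginv i'.+1 (inversion B (Tit B ginv i' x))
  end.

Definition nbhd (r : R) (A : vec -> Prop) (x : vec) : Prop :=
  exists2 b, A b & edist x b < r.

(* the orbit of x is defined and stays in the open unit ball
   (the inversion being defined off 0, we require T^i x <> 0) *)
Definition orbit_in_ball B ginv (x : vec) : Prop :=
  forall i, 0 < enorm (Tit B ginv i x) < 1.

Definition eps_orbits B ginv (A : vec -> Prop) (eps : R) (x : vec) : Prop :=
  orbit_in_ball B ginv x /\ forall i, nbhd eps A (Tit B ginv i x).

Definition eventually_eps_orbits B ginv (A : vec -> Prop) (eps : R) (x : vec)
  : Prop :=
  orbit_in_ball B ginv x /\
  exists N, forall i, (N <= i)%N -> nbhd eps A (Tit B ginv i x).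

Definition converges_to B ginv (A : vec -> Prop) (x : vec) : Prop :=
  orbit_in_ball B ginv x /\
  forall eps : R, 0 < eps -> eventually_eps_orbits B ginv A eps x.

Definition voronoi (a : vec) (A : vec -> Prop) (x : vec) : Prop :=
  forall b, A b -> b <> a -> edist x a <= edist x b.

Definition voronoi_r (r : R) (a : vec) (A : vec -> Prop) (x : vec) : Prop :=
  edist x a < r /\ voronoi a A x.

Definition eps_trap B ginv (A : vec -> Prop) (eps : R) (a : vec) : Prop :=
  A a /\
  (forall i, (0 < i)%N -> A (Tit B ginv i a)) /\
  (forall x, eps_orbits B ginv A eps x -> voronoi_r eps a A x ->
     forall i, voronoi_r eps (Tit B ginv i a) A (Tit B ginv i x)).

Definition eps_trapped_by B ginv (A : vec -> Prop) (eps : R) (a x : vec)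
  : Prop :=
  eps_trap B ginv A eps a /\ eps_orbits B ginv A eps x /\
  voronoi_r eps a A x.

End Defs.

(* Main.v *)
Require Import Defs.
From mathcomp Require Import all_boot all_order all_algebra.
From mathcomp Require Import reals.
From mathcomp Require Import ring.
Import Order.TTheory GRing.Theory Num.Theory.
Local Open Scope ring_scope.

Section Aux.
Variables (R : realType) (n : nat).
Notation vec := 'rV[R]_n.

Lemma sum_ge0 (x : vec) : 0 <= \sum_(i < n) (x ord0 i) ^+ 2.
Proof. by apply: sumr_ge0 => i _; rewrite sqr_ge0. Qed.

Lemma enorm_sq (x : vec) : enorm x ^+ 2 = \sum_(i < n) (x ord0 i) ^+ 2.
Proof. by rewrite /enorm sqr_sqrtr // sum_ge0. Qed.

Lemma iota0_fix (a : vec) : enorm a = 1 -> iota0 a = a.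
Proof. by move=> h; rewrite /iota0 h expr1n invr1 scale1r. Qed.

Lemma iota0_dist (x a : vec) : 0 < enorm x <= 1 -> enorm a = 1 ->
  edist x a <= edist (iota0 x) a.
Proof.
move=> /andP[x0 x1] a1.
rewrite /edist /enorm ler_sqrt; last exact: sum_ge0.
set c := (enorm x ^+ 2)^-1.
have hx : c * \sum_(i < n) (x ord0 i) ^+ 2 = 1.
  by rewrite -enorm_sq mulVf // expf_neq0 // gt_eqF.
have ha : \sum_(i < n) (a ord0 i) ^+ 2 = 1 by rewrite -enorm_sq a1 expr1n.
have c1 : 1 <= c.
  rewrite /c invr_ge1 ?unitfE ?expf_neq0 ?gt_eqF ?exprn_gt0 //.
  by rewrite expr_le1 // ltW.
have e : \sum_(i < n) ((iota0 x - a) ord0 i) ^+ 2 =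
         c * \sum_(i < n) ((x - a) ord0 i) ^+ 2.
  apply/eqP; rewrite -subr_eq0 mulr_sumr -sumrB.
  have -> : \sum_(i < n) (((iota0 x - a) ord0 i) ^+ 2 - c * ((x - a) ord0 i) ^+ 2)
     = \sum_(i < n) ((c^+2 - c) * (x ord0 i) ^+ 2 + (1 - c) * (a ord0 i) ^+ 2).
    by apply: eq_bigr => i _; rewrite /iota0 !mxE -/c; ring.
  rewrite big_split /= -!mulr_sumr ha.
  have -> : (c ^+ 2 - c) * \sum_(i < n) (x ord0 i) ^+ 2 = c - 1.
    by rewrite mulrBl expr2 -mulrA hx mulr1.
  by apply/eqP; ring.
rewrite e ler_peMl //; first exact: sum_ge0.
Qed.

Lemma edist_eq0 (x a : vec) : edist x a = 0 -> x = a.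
Proof.
rewrite /edist /enorm => /eqP; rewrite sqrtr_eq0 => h.
have h0 : \sum_(i < n) ((x - a) ord0 i) ^+ 2 == 0.
  by rewrite eq_le h sum_ge0.
move: h0; rewrite psumr_eq0; last by move=> i _; rewrite sqr_ge0.
move=> /allP hall; apply/rowP => i.
have := hall i (mem_index_enum i); rewrite /= sqrf_eq0 !mxE subr_eq0.
by move/eqP.
Qed.

End Aux.
Arguments iota0_fix {R n a}.
Arguments iota0_dist {R n x a}.
Arguments edist_eq0 {R n x a}.

Theorem lemma3p4 (R : realType) (n : nat)
  (Z : ('rV[R]_n -> 'rV[R]_n) -> Prop) (B : 'rV[R]_n -> 'rV[R]_n)
  (gam ginv : nat -> 'rV[R]_n -> 'rV[R]_n)
  (A : 'rV[R]_n -> Prop) (eps : R) (a x : 'rV[R]_n) :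
  isometry_group Z -> discrete_group Z ->
  is_isometry B -> B 0 = 0 ->
  (forall i, (0 < i)%N -> Z (gam i)) ->
  (forall i, (0 < i)%N -> cancel (gam i) (ginv i) /\ cancel (ginv i) (gam i)) ->
  (forall y, A y -> on_sphere y) ->
  0 < eps -> A a ->
  eps_trapped_by B ginv A eps a x ->
  ~ converges_to B ginv A x.
Proof.
move=> [Ziso _ _ _] _ Biso _ Zg gK Asph _ Aa [[_ [TA Ttrap]] [xorb xvor]] [_ conv].
have ginv_iso : forall i, (0 < i)%N -> is_isometry (ginv i).
  move=> i i0 u v; have [_ K] := gK i i0.
  by rewrite -(Ziso _ (Zg i i0)) !K.
have Tsph : forall i, enorm (Tit B ginv i a) = 1.
  by case=> [|i]; [exact: Asph | exact: Asph (TA _ _)].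
have mono : forall i, edist x a <= edist (Tit B ginv i x) (Tit B ginv i a).
  elim=> [|i IH] //=.
  rewrite ginv_iso // /inversion Biso (le_trans IH) //.
  rewrite (iota0_fix (Tsph i)); apply: iota0_dist (Tsph i).
  by have /andP[-> /ltW ->] := xorb.1 i.
have d0 : 0 < edist x a.
  rewrite lt_def /edist /enorm sqrtr_ge0 andbT; apply/eqP => /edist_eq0 e.
  by have := xorb.1 0%N; rewrite /= e (Tsph 0%N) ltxx andbF.
have [_ [N HN]] := conv _ d0.
have [b Ab hb] := HN N (leqnn N).
have [h1 h2] := Ttrap x xorb xvor N.
case: (eqVneq b (Tit B ginv N a)) => [eb|/eqP neb].
  by move: hb; rewrite eb => hb; have := lt_le_trans hb (mono N); rewrite ltxx.
have := lt_le_trans (le_lt_trans (h2 b Ab neb) hb) (mono N).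
by rewrite ltxx.
Qed.
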